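(* Let $f\in\mathcal A_C$, $n\in\mathbb N$, and let $g:\mathbb R\to\mathbb R$ be such that the pointwise derivatives $g^{(k)}$ exist at every point of $\mathbb R$ and $g^{(k)}\in AC(\overline{\mathbb R})$ for each $0\le k\le n$. Then $f*g\in C^n(\mathbb R)$ and $(f*g)^{(n)}(x)=f*g^{(n)}(x)$ for every $x\in\mathbb R$.
   Context: $AC(\overline{\mathbb R})$ denotes the functions on $\mathbb R$ that are absolutely continuous on each compact interval and of bounded variation on $\mathbb R$. $C^0(\overline{\mathbb R})$: continuous $F:\mathbb R\to\mathbb R$ with finite limits $F(\pm\infty)$; $\mathcal B_C=\{F\in C^0(\overline{\mathbb R}):F(-\infty)=0\}$; $\mathcal A_C=\{f\in\mathcal D'(\mathbb R): f=F'\text{ (distributional derivative) for some } F\in\mathcal B_C\}$, the primitive being unique. For $h\in\mathcal A_C$ with primitive $H$ and $g$ of bounded variation, $\int_{-\infty}^\infty hg=H(\infty)g(\infty)-\int_{-\infty}^\infty H\,dg$ (Henstock–Stieltjes). For $f\in\mathcal A_C$ with primitive $F$, $f(x-\cdot)$ is the element of $\mathcal A_C$ with primitive $y\mapsto F(\infty)-F(x-y)$, and for $g$ of bounded variation $f*g(x)=\int_{-\infty}^\infty f(x-y)g(y)\,dy$ is the product integral of $f(x-\cdot)$ and $g$. *)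

(* Defs.v *)
From Stdlib Require Import Reals Lra ClassicalEpsilon.
Open Scope R_scope.

Fixpoint fsum (n : nat) (u : nat -> R) : R :=
  match n with O => 0 | S m => fsum m u + u m end.

Definition lim_pinf (u : R -> R) (l : R) : Prop :=
  forall eps, eps > 0 -> exists M, forall y, y >= M -> Rabs (u y - l) < eps.
Definition lim_minf (u : R -> R) (l : R) : Prop :=
  forall eps, eps > 0 -> exists M, forall y, y <= M -> Rabs (u y - l) < eps.

(* chosen values u(+oo), u(-oo) (meaningful when the limit exists) *)
Definition at_pinf (u : R -> R) : R := epsilon (inhabits 0) (lim_pinf u).
Definition at_minf (u : R -> R) : R := epsilon (inhabits 0) (lim_minf u).

Definition bounded_variation (g : R -> R) : Prop :=
  exists V, forall (n : nat) (x : nat -> R),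
    (forall i, (i < n)%nat -> x i <= x (S i)) ->
    fsum n (fun i => Rabs (g (x (S i)) - g (x i))) <= V.

(* absolute continuity on the compact interval [a,b]: for non-overlapping
   subintervals (x(2i), x(2i+1)), i<n, listed in increasing order *)
Definition abs_cont_on (g : R -> R) (a b : R) : Prop :=
  forall eps, eps > 0 -> exists delta, delta > 0 /\
    forall (n : nat) (x : nat -> R),
      a <= x O -> x (2 * n)%nat <= b ->
      (forall j, (j < 2 * n)%nat -> x j <= x (S j)) ->
      fsum n (fun i => x (S (2 * i)) - x (2 * i)%nat) < delta ->
      fsum n (fun i => Rabs (g (x (S (2 * i))) - g (x (2 * i)%nat))) < eps.

Definition AC_bar (g : R -> R) : Prop :=
  (forall a b, a <= b -> abs_cont_on g a b) /\ bounded_variation g.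

(* B_C : continuous, F(-oo) = 0, finite F(+oo).  An element f of A_C is
   represented by its (unique) primitive F in B_C. *)
Definition B_C (F : R -> R) : Prop :=
  continuity F /\ lim_minf F 0 /\ exists l, lim_pinf F l.

Definition RS_integral_on (H g : R -> R) (a b I : R) : Prop :=
  forall eps, eps > 0 -> exists delta, delta > 0 /\
    forall (n : nat) (x t : nat -> R),
      x O = a -> x n = b ->
      (forall i, (i < n)%nat -> x i <= t i <= x (S i) /\ x (S i) - x i < delta) ->
      Rabs (fsum n (fun i => H (t i) * (g (x (S i)) - g (x i))) - I) < eps.

Definition RS_integral_R (H g : R -> R) (L : R) : Prop :=
  forall eps, eps > 0 -> exists M, forall a b, a <= - M -> M <= b ->
    exists I, RS_integral_on H g a b I /\ Rabs (I - L) < eps.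

Definition RS_int_R (H g : R -> R) : R :=
  epsilon (inhabits 0) (RS_integral_R H g).

(* f*g(x) for f = F' in A_C and g of bounded variation:
   f(x-.) has primitive H(y) = F(oo) - F(x-y), and
   f*g(x) = H(oo) g(oo) - int H dg. *)
Definition conv (F g : R -> R) (x : R) : R :=
  let H := fun y => at_pinf F - F (x - y) in
  at_pinf H * at_pinf g - RS_int_R H g.

(* Main.v *)
Require Import Defs.
From Stdlib Require Import Reals Lra Lia ClassicalEpsilon Classical ZArith.
From Coquelicot Require Coquelicot.
Open Scope R_scope.
Module AD.
Import Coquelicot.Coquelicot.

Lemma antideriv (F : R -> R) : continuity F -> exists G, forall u, derivable_pt_lim G u (F u).
Proof.
intros HF. exists (fun u => RInt F 0 u). intros u. apply is_derive_Reals.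
apply (is_derive_RInt F (fun u => RInt F 0 u) 0 u).
- apply filter_forall. intros b. apply (RInt_correct (V:=R_CompleteNormedModule)). apply (ex_RInt_continuous (V:=R_CompleteNormedModule)).
  intros z _. apply continuity_pt_filterlim. apply HF.
- apply continuity_pt_filterlim. apply HF.
Qed.
End AD.
Definition antideriv := AD.antideriv.

Lemma fsum_ext n u v : (forall i, (i < n)%nat -> u i = v i) -> fsum n u = fsum n v.
Proof. induction n; simpl; intros H; auto. rewrite IHn by (intros; apply H; lia). rewrite H by lia. auto. Qed.

Lemma fsum_plus n u v : fsum n (fun i => u i + v i) = fsum n u + fsum n v.
Proof. induction n; simpl; [lra|rewrite IHn; lra]. Qed.

Lemma fsum_minus n u v : fsum n (fun i => u i - v i) = fsum n u - fsum n v.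
Proof. induction n; simpl; [lra|rewrite IHn; lra]. Qed.

Lemma fsum_scal n c u : fsum n (fun i => c * u i) = c * fsum n u.
Proof. induction n; simpl; [lra|rewrite IHn; lra]. Qed.

Lemma fsum_le n u v : (forall i, (i < n)%nat -> u i <= v i) -> fsum n u <= fsum n v.
Proof. induction n; simpl; intros H; [lra|]. assert (u n <= v n) by (apply H; lia).
 assert (fsum n u <= fsum n v) by (apply IHn; intros; apply H; lia). lra. Qed.

Lemma fsum_abs n u : Rabs (fsum n u) <= fsum n (fun i => Rabs (u i)).
Proof. induction n; simpl. rewrite Rabs_R0; lra.
 eapply Rle_trans; [apply Rabs_triang|]. lra. Qed.

Lemma fsum_ge0 n u : (forall i, (i < n)%nat -> 0 <= u i) -> 0 <= fsum n u.
Proof. intros H. replace 0 with (fsum n (fun _ => 0)). apply fsum_le; auto.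
 clear H; induction n; simpl; lra. Qed.

Lemma fsum_tele n u : fsum n (fun i => u (S i) - u i) = u n - u O.
Proof. induction n; simpl; [lra|rewrite IHn; lra]. Qed.

Lemma fsum_split n m u : fsum (n + m) u = fsum n u + fsum m (fun i => u (n + i)%nat).
Proof. induction m; simpl. rewrite Nat.add_0_r; lra.
 rewrite Nat.add_succ_r. simpl. rewrite IHm. lra. Qed.

Lemma fsum_swap n m (a : nat -> nat -> R) :
  fsum n (fun i => fsum m (fun j => a i j)) = fsum m (fun j => fsum n (fun i => a i j)).
Proof. induction n; simpl.
 - induction m; simpl; lra.
 - rewrite IHn. rewrite <- fsum_plus. auto. Qed.

Lemma fsum_const n c : fsum n (fun _ => c) = INR n * c.
Proof. induction n; simpl fsum. simpl; lra. rewrite IHn, S_INR; lra. Qed.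

Lemma gap X Y C : 0 <= C -> (forall eta, eta > 0 -> X <= Y + C * eta) -> X <= Y.
Proof. intros HC H. destruct (Rle_dec X Y) as [h|h]; auto.
 assert (X - Y > 0) by lra.
 specialize (H ((X - Y) / (2 * (C + 1)))).
 assert (C * ((X - Y) / (2 * (C + 1))) < X - Y).
 { unfold Rdiv. rewrite <- Rmult_assoc. apply Rmult_lt_reg_r with (2 * (C+1)). lra.
   rewrite Rmult_assoc, Rinv_l by lra. nra. }
 assert ((X - Y) / (2 * (C + 1)) > 0). { apply Rdiv_lt_0_compat; lra. }
 specialize (H H2). lra. Qed.

Lemma cont_intro f x : (forall eps, eps > 0 -> exists d, d > 0 /\ forall y, Rabs (y - x) < d -> Rabs (f y - f x) < eps) -> continuity_pt f x.
Proof. intros H eps He. destruct (H eps He) as [d [Hd Hy]]. exists d; split; auto.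
 intros y [_ Hy2]. apply Hy. exact Hy2. Qed.

Lemma cont_elim f x : continuity_pt f x -> forall eps, eps > 0 -> exists d, d > 0 /\ forall y, Rabs (y - x) < d -> Rabs (f y - f x) < eps.
Proof. intros H eps He. destruct (H eps He) as [d [Hd Hy]]. exists d; split; auto.
 intros y Hy2. destruct (Req_dec y x). subst. unfold Rminus; rewrite Rplus_opp_r, Rabs_R0; lra.
 apply (Hy y). split; [split; [exact I|auto]|exact Hy2]. Qed.

Definition mono (x : nat -> R) n := forall i, (i < n)%nat -> x i <= x (S i).
Definition varsumf (g : R -> R) (x : nat -> R) n := fsum n (fun i => Rabs (g (x (S i)) - g (x i))).

Lemma fsum_shift q v : fsum (S q) v = v O + fsum q (fun i => v (S i)).
Proof. induction q; simpl in *. lra. rewrite IHq. lra. Qed.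

Lemma concat_seq (g : R -> R) x p y q : mono x p -> mono y q -> x p <= y O ->
  exists z, mono z (p + S q) /\ z O = x O /\ z (p + S q)%nat = y q /\
   varsumf g z (p + S q) >= varsumf g x p + varsumf g y q.
Proof.
intros Hx Hy Hxy.
exists (fun k => if (k <=? p)%nat then x k else y (k - S p)%nat).
split; [|split; [|split]].
- intros i Hi. destruct (Nat.leb_spec i p); destruct (Nat.leb_spec (S i) p).
  + apply Hx; lia.
  + assert (i = p) by lia. subst. replace (S p - S p)%nat with O by lia. auto.
  + lia.
  + replace (S i - S p)%nat with (S (i - S p)) by lia. apply Hy; lia.
- simpl. auto.
- destruct (Nat.leb_spec (p + S q) p). lia. f_equal; lia.
- unfold varsumf. rewrite fsum_split, fsum_shift.
  assert (E1 : fsum p (fun i => Rabs (g ((if (S i <=? p)%nat then x (S i) else y (S i - S p)%nat)) -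
     g ((if (i <=? p)%nat then x i else y (i - S p)%nat)))) = fsum p (fun i => Rabs (g (x (S i)) - g (x i)))).
  { apply fsum_ext. intros i Hi. destruct (Nat.leb_spec (S i) p); [|lia]. destruct (Nat.leb_spec i p); [|lia]. auto. }
  rewrite E1.
  assert (E2 : fsum q (fun i => Rabs (g (if (S (p + S i) <=? p)%nat then x (S (p + S i)) else y (S (p + S i) - S p)%nat) -
     g (if (p + S i <=? p)%nat then x (p + S i)%nat else y (p + S i - S p)%nat))) = fsum q (fun i => Rabs (g (y (S i)) - g (y i)))).
  { apply fsum_ext. intros i Hi. destruct (Nat.leb_spec (S (p + S i)) p); [lia|]. destruct (Nat.leb_spec (p + S i) p); [lia|].
    f_equal. f_equal; f_equal; f_equal; lia. }
  simpl plus. rewrite E2. pose proof (Rabs_pos (g (if (S (p + 0) <=? p)%nat then x (S (p + 0)) else y (S (p + 0) - S p)%nat) -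
      g (if (p + 0 <=? p)%nat then x (p + 0)%nat else y (p + 0 - S p)%nat))). lra.
Qed.

Lemma bv_bound g : bounded_variation g -> exists V, 0 <= V /\ forall n x, mono x n -> varsumf g x n <= V.
Proof. intros [V HV]. exists V. split. specialize (HV O (fun _ => 0)). simpl in HV. apply HV. intros; lia.
 intros n x Hx. apply HV. exact Hx. Qed.

Lemma bv_osc g V : (forall n x, mono x n -> varsumf g x n <= V) -> forall u v, Rabs (g u - g v) <= V.
Proof. intros HV u v. destruct (Rle_dec u v).
 - specialize (HV 1%nat (fun i => if (i =? 0)%nat then u else v)). unfold varsumf in HV. simpl in HV.
   rewrite Rabs_minus_sym. assert (mono (fun i => if (i =? 0)%nat then u else v) 1) by (intros i Hi; replace i with O by lia; simpl; lra).
   specialize (HV H). lra.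
 - specialize (HV 1%nat (fun i => if (i =? 0)%nat then v else u)). unfold varsumf in HV. simpl in HV.
   assert (mono (fun i => if (i =? 0)%nat then v else u) 1) by (intros i Hi; replace i with O by lia; simpl; lra).
   specialize (HV H). lra. Qed.

Lemma archi_nat (r : R) : exists K : nat, r < INR K.
Proof. destruct (Rle_dec r 0). exists 1%nat. simpl; lra.
 destruct (archimed r) as [H1 H2]. exists (Z.to_nat (up r)).
 assert (0 < up r)%Z. { apply lt_IZR. simpl. lra. }
 rewrite INR_IZR_INZ, Z2Nat.id by lia. lra. Qed.

Lemma tail_pos g : bounded_variation g -> forall eps, eps > 0 ->
  exists M, forall n x, mono x n -> M <= x O -> varsumf g x n <= eps.
Proof.
intros Hbv eps He. destruct (bv_bound g Hbv) as [V [HV0 HV]].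
destruct (classic (exists M, forall n x, mono x n -> M <= x O -> varsumf g x n <= eps)) as [H|H]; auto.
exfalso.
assert (Hc : forall M, exists n x, mono x n /\ M <= x O /\ varsumf g x n > eps).
{ intros M. apply NNPP. intros C. apply H. exists M. intros n x Hm HM. apply Rnot_lt_le. intros Hlt.
  apply C. exists n, x. repeat split; auto. }
assert (Hk : forall K : nat, exists n x, mono x n /\ varsumf g x n >= INR K * eps).
{ induction K.
  - exists O, (fun _ => 0). split. intros i Hi; lia. unfold varsumf; simpl; lra.
  - destruct IHK as [n [x [Hm Hs]]]. destruct (Hc (x n)) as [m [y [Hm' [Hy Hs']]]].
    destruct (concat_seq g x n y m Hm Hm' Hy) as [z [Hz1 [_ [_ Hz4]]]].
    exists (n + S m)%nat, z. split; auto. rewrite S_INR. lra. }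
destruct (archi_nat (V / eps)) as [K HK].
destruct (Hk K) as [n [x [Hm Hs]]]. specialize (HV n x Hm).
assert (V < INR K * eps). { apply Rmult_lt_reg_r with (/ eps). apply Rinv_0_lt_compat; lra.
  rewrite Rmult_assoc, Rinv_r by lra. lra. }
lra.
Qed.

Lemma tail_neg g : bounded_variation g -> forall eps, eps > 0 ->
  exists M, forall n x, mono x n -> x n <= M -> varsumf g x n <= eps.
Proof.
intros Hbv eps He. destruct (bv_bound g Hbv) as [V [HV0 HV]].
destruct (classic (exists M, forall n x, mono x n -> x n <= M -> varsumf g x n <= eps)) as [H|H]; auto.
exfalso.
assert (Hc : forall M, exists n x, mono x n /\ x n <= M /\ varsumf g x n > eps).
{ intros M. apply NNPP. intros C. apply H. exists M. intros n x Hm HM. apply Rnot_lt_le. intros Hlt.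
  apply C. exists n, x. repeat split; auto. }
assert (Hk : forall K : nat, exists n x, mono x n /\ varsumf g x n >= INR K * eps).
{ induction K.
  - exists O, (fun _ => 0). split. intros i Hi; lia. unfold varsumf; simpl; lra.
  - destruct IHK as [n [x [Hm Hs]]]. destruct (Hc (x O)) as [m [y [Hm' [Hy Hs']]]].
    destruct (concat_seq g y m x n Hm' Hm Hy) as [z [Hz1 [_ [_ Hz4]]]].
    exists (m + S n)%nat, z. split; auto. rewrite S_INR. lra. }
destruct (archi_nat (V / eps)) as [K HK].
destruct (Hk K) as [n [x [Hm Hs]]]. specialize (HV n x Hm).
assert (V < INR K * eps). { apply Rmult_lt_reg_r with (/ eps). apply Rinv_0_lt_compat; lra.
  rewrite Rmult_assoc, Rinv_r by lra. lra. }
lra.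
Qed.

Lemma tail_pos_osc g : bounded_variation g -> forall eps, eps > 0 ->
  exists M, forall u v, M <= u -> M <= v -> Rabs (g u - g v) <= eps.
Proof. intros Hbv eps He. destruct (tail_pos g Hbv eps He) as [M HM]. exists M. intros u v Hu Hv.
 destruct (Rle_dec u v).
 - specialize (HM 1%nat (fun i => if (i =? 0)%nat then u else v)). unfold varsumf in HM. simpl in HM.
   rewrite Rabs_minus_sym. assert (mono (fun i => if (i =? 0)%nat then u else v) 1) by (intros i Hi; replace i with O by lia; simpl; lra).
   specialize (HM H). simpl in HM. specialize (HM Hu). lra.
 - specialize (HM 1%nat (fun i => if (i =? 0)%nat then v else u)). unfold varsumf in HM. simpl in HM.
   assert (mono (fun i => if (i =? 0)%nat then v else u) 1) by (intros i Hi; replace i with O by lia; simpl; lra).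
   specialize (HM H). simpl in HM. specialize (HM Hv). lra. Qed.

Lemma tail_neg_osc g : bounded_variation g -> forall eps, eps > 0 ->
  exists M, forall u v, u <= M -> v <= M -> Rabs (g u - g v) <= eps.
Proof. intros Hbv eps He. destruct (tail_neg g Hbv eps He) as [M HM]. exists M. intros u v Hu Hv.
 destruct (Rle_dec u v).
 - specialize (HM 1%nat (fun i => if (i =? 0)%nat then u else v)). unfold varsumf in HM. simpl in HM.
   rewrite Rabs_minus_sym. assert (mono (fun i => if (i =? 0)%nat then u else v) 1) by (intros i Hi; replace i with O by lia; simpl; lra).
   specialize (HM H). simpl in HM. specialize (HM Hv). lra.
 - specialize (HM 1%nat (fun i => if (i =? 0)%nat then v else u)). unfold varsumf in HM. simpl in HM.
   assert (mono (fun i => if (i =? 0)%nat then v else u) 1) by (intros i Hi; replace i with O by lia; simpl; lra).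
   specialize (HM H). simpl in HM. specialize (HM Hu). lra. Qed.

Lemma mvt f f' a b : (forall t, derivable_pt_lim f t (f' t)) -> a < b ->
  exists c, a < c < b /\ f b - f a = f' c * (b - a).
Proof. intros H Hab. destruct (MVT_cor2 f f' a b Hab (fun c _ => H c)) as [c [E Hc]]. exists c; auto. Qed.

Lemma deriv_tail_pos g h : bounded_variation g -> bounded_variation h ->
  (forall t, derivable_pt_lim g t (h t)) -> forall eps, eps > 0 -> exists M, forall t, M <= t -> Rabs (h t) < eps.
Proof.
intros Hg Hh Hd eps He. destruct (bv_bound g Hg) as [Vg [HVg0 HVg]].
destruct (tail_pos_osc h Hh (eps/2)) as [M HM]. lra.
exists M. intros t Ht. apply Rnot_le_lt. intros Hc.
set (T := 2 * (Vg + 1) / eps).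
assert (HT : T > 0). { unfold T. apply Rdiv_lt_0_compat; lra. }
destruct (mvt g h M (M + T) Hd) as [c [Hc1 Hc2]]. lra.
assert (Habs : Rabs (h c) >= eps / 2).
{ specialize (HM c t ltac:(lra) Ht). pose proof (Rabs_triang_inv (h t) (h c - h t)). 
  replace (h t - (h c - h t)) with (2 * h t - h c) in H by ring.
  pose proof (Rabs_triang (h c) (h t - h c)). replace (h c + (h t - h c)) with (h t) in H0 by ring.
  rewrite Rabs_minus_sym in HM. lra. }
pose proof (bv_osc g Vg HVg (M + T) M). rewrite Hc2 in H.
rewrite Rabs_mult in H. replace (M + T - M) with T in H by ring. rewrite (Rabs_right T) in H by lra.
assert (eps / 2 * T = Vg + 1). { unfold T. field. lra. }
nra.
Qed.

Lemma deriv_tail_neg g h : bounded_variation g -> bounded_variation h ->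
  (forall t, derivable_pt_lim g t (h t)) -> forall eps, eps > 0 -> exists M, forall t, t <= M -> Rabs (h t) < eps.
Proof.
intros Hg Hh Hd eps He. destruct (bv_bound g Hg) as [Vg [HVg0 HVg]].
destruct (tail_neg_osc h Hh (eps/2)) as [M HM]. lra.
exists M. intros t Ht. apply Rnot_le_lt. intros Hc.
set (T := 2 * (Vg + 1) / eps).
assert (HT : T > 0). { unfold T. apply Rdiv_lt_0_compat; lra. }
destruct (mvt g h (M - T) M Hd) as [c [Hc1 Hc2]]. lra.
assert (Habs : Rabs (h c) >= eps / 2).
{ specialize (HM c t ltac:(lra) Ht). pose proof (Rabs_triang (h c) (h t - h c)). replace (h c + (h t - h c)) with (h t) in H by ring.
  rewrite Rabs_minus_sym in HM. lra. }
pose proof (bv_osc g Vg HVg M (M - T)). rewrite Hc2 in H.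
rewrite Rabs_mult in H. replace (M - (M - T)) with T in H by ring. rewrite (Rabs_right T) in H by lra.
assert (eps / 2 * T = Vg + 1). { unfold T. field. lra. }
nra.
Qed.

Lemma lim_pinf_unique u l1 l2 : lim_pinf u l1 -> lim_pinf u l2 -> l1 = l2.
Proof. intros H1 H2. apply Rle_antisym; apply Rnot_lt_le; intros Hl.
 - destruct (H1 ((l1 - l2)/2)) as [M1 HM1]. lra. destruct (H2 ((l1 - l2)/2)) as [M2 HM2]. lra.
   specialize (HM1 (Rmax M1 M2) (Rle_ge _ _ (Rmax_l _ _))). specialize (HM2 (Rmax M1 M2) (Rle_ge _ _ (Rmax_r _ _))).
   apply Rabs_def2 in HM1. apply Rabs_def2 in HM2. lra.
 - destruct (H1 ((l2 - l1)/2)) as [M1 HM1]. lra. destruct (H2 ((l2 - l1)/2)) as [M2 HM2]. lra.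
   specialize (HM1 (Rmax M1 M2) (Rle_ge _ _ (Rmax_l _ _))). specialize (HM2 (Rmax M1 M2) (Rle_ge _ _ (Rmax_r _ _))).
   apply Rabs_def2 in HM1. apply Rabs_def2 in HM2. lra. Qed.

Lemma at_pinf_eq u l : lim_pinf u l -> at_pinf u = l.
Proof. intros H. apply (lim_pinf_unique u). unfold at_pinf. apply epsilon_spec. exists l; auto. auto. Qed.

Definition part (x t : nat -> R) n a b d := x O = a /\ x n = b /\
  forall i, (i < n)%nat -> (x i <= t i <= x (S i) /\ x (S i) - x i < d).
Definition RSsum (H g : R -> R) (x t : nat -> R) n := fsum n (fun i => H (t i) * (g (x (S i)) - g (x i))).

Lemma rs_use H g a b I : RS_integral_on H g a b I -> forall eps, eps > 0 -> exists d, d > 0 /\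
  forall n x t, part x t n a b d -> Rabs (RSsum H g x t n - I) < eps.
Proof. intros HI eps He. destruct (HI eps He) as [d [Hd Hp]]. exists d; split; auto.
 intros n x t [H1 [H2 H3]]. apply Hp; auto. Qed.

Lemma rs_intro H g a b I : (forall eps, eps > 0 -> exists d, d > 0 /\
  forall n x t, part x t n a b d -> Rabs (RSsum H g x t n - I) < eps) -> RS_integral_on H g a b I.
Proof. intros HI eps He. destruct (HI eps He) as [d [Hd Hp]]. exists d; split; auto.
 intros n x t H1 H2 H3. apply Hp; split; auto. Qed.

Lemma part_mono x t n a b d : part x t n a b d -> mono x n.
Proof. intros [_ [_ H]] i Hi. destruct (H i Hi). lra. Qed.

Lemma part_bounds x t n a b d : part x t n a b d -> forall i, (i <= n)%nat -> a <= x i <= b.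
Proof. intros Hp. pose proof (part_mono _ _ _ _ _ _ Hp) as Hm. destruct Hp as [H0 [Hn _]].
 assert (A : forall i, (i <= n)%nat -> a <= x i).
 { induction i; intros Hi. lra. specialize (IHi ltac:(lia)). specialize (Hm i ltac:(lia)). lra. }
 assert (B : forall k, (k <= n)%nat -> x (n - k)%nat <= b).
 { induction k; intros Hk. rewrite Nat.sub_0_r; lra. specialize (IHk ltac:(lia)).
   specialize (Hm (n - S k)%nat ltac:(lia)). replace (S (n - S k)) with (n - k)%nat in Hm by lia. lra. }
 intros i Hi. split. apply A; auto. replace i with (n - (n - i))%nat by lia. apply B; lia. Qed.

Definition unif a b N (i : nat) := a + INR i * (b - a) / INR N.

Lemma unif_part a b d : a <= b -> d > 0 -> exists N, (0 < N)%nat /\ part (unif a b N) (unif a b N) N a b d.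
Proof. intros Hab Hd. destruct (archi_nat ((b - a) / d)) as [N HN].
 assert (HN0 : (0 < N)%nat). { destruct N. simpl in HN. assert (0 <= (b - a)/d) by (apply Rmult_le_pos; [lra| left; apply Rinv_0_lt_compat; lra]). lra. lia. }
 assert (HNr : 0 < INR N) by (apply lt_0_INR; lia).
 exists N. split; auto. unfold part, unif. split; [|split].
 - simpl. unfold Rdiv. ring.
 - field. lra.
 - intros i Hi. rewrite S_INR. split. split; [lra|].
   assert (0 <= (b - a) / INR N) by (apply Rmult_le_pos; [lra| left; apply Rinv_0_lt_compat; lra]).
   replace (a + (INR i + 1) * (b - a) / INR N) with (a + INR i * (b - a) / INR N + (b - a) / INR N) by (field; lra). lra.
   replace (a + (INR i + 1) * (b - a) / INR N - (a + INR i * (b - a) / INR N)) with ((b - a) / INR N) by (field; lra).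
   assert (b - a < INR N * d).
   { apply Rmult_lt_reg_r with (/ d). apply Rinv_0_lt_compat; lra.
     rewrite Rmult_assoc, Rinv_r by lra. unfold Rdiv in HN. lra. }
   apply Rmult_lt_reg_r with (INR N); auto. unfold Rdiv. rewrite Rmult_assoc, Rinv_l by lra. lra. Qed.

Lemma blocks (g : R -> R) V (w : nat -> nat -> R) n m :
  (forall p z, mono z p -> varsumf g z p <= V) ->
  (forall i, (i < n)%nat -> mono (w i) m) ->
  (forall i, (S i < n)%nat -> w i m <= w (S i) O) ->
  fsum n (fun i => varsumf g (w i) m) <= V.
Proof.
intros HV Hm Hj.
assert (K : forall k, (k <= n)%nat -> exists p z, mono z p /\ varsumf g z p >= fsum k (fun i => varsumf g (w i) m) /\
   ((k < n)%nat -> z p <= w k O)).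
{ induction k; intros Hk.
  - exists O, (fun _ => w O O). split. intros i Hi; lia. split. unfold varsumf; simpl; lra. intros _; lra.
  - destruct (IHk ltac:(lia)) as [p [z [Hz1 [Hz2 Hz3]]]].
    destruct (concat_seq g z p (w k) m Hz1 (Hm k ltac:(lia)) (Hz3 ltac:(lia))) as [z' [H1 [_ [H3 H4]]]].
    exists (p + S m)%nat, z'. split; auto. split. simpl. lra. intros Hk'. rewrite H3. apply Hj. lia. }
destruct (K n (le_n n)) as [p [z [H1 [H2 _]]]]. specialize (HV p z H1). lra.
Qed.

Lemma clamp_fact xi xi1 yj yj1 : xi <= xi1 -> yj <= yj1 ->
  (Rmax xi (Rmin yj1 xi1) = Rmax yj (Rmin xi1 yj1) /\ Rmax xi (Rmin yj xi1) = Rmax yj (Rmin xi yj1) /\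
    Rmax xi yj <= Rmin xi1 yj1) \/
  (Rmax xi (Rmin yj1 xi1) = Rmax xi (Rmin yj xi1) /\ Rmax yj (Rmin xi1 yj1) = Rmax yj (Rmin xi yj1)).
Proof. intros H1 H2. unfold Rmax, Rmin.
 repeat match goal with |- context [Rle_dec ?a ?b] => destruct (Rle_dec a b) | H : context [Rle_dec ?a ?b] |- _ => destruct (Rle_dec a b) end; try (left; repeat split; lra); try (right; split; lra).
Qed.

Lemma cmp (H g : R -> R) V a b d e x t n y s m :
  (forall p z, mono z p -> varsumf g z p <= V) -> 0 <= e ->
  part x t n a b d -> part y s m a b d ->
  (forall u v, a <= u <= b -> a <= v <= b -> Rabs (u - v) < 2 * d -> Rabs (H u - H v) <= e) ->
  Rabs (RSsum H g x t n - RSsum H g y s m) <= e * V.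
Proof.
intros HV He0 Px Py HH.
pose proof (part_bounds _ _ _ _ _ _ Px) as Bx. pose proof (part_bounds _ _ _ _ _ _ Py) as By.
pose proof (part_mono _ _ _ _ _ _ Px) as Mx. pose proof (part_mono _ _ _ _ _ _ Py) as My.
destruct Px as [Px0 [Pxn Px]]. destruct Py as [Py0 [Pyn Py]].
set (cl := fun i z => Rmax (x i) (Rmin z (x (S i)))).
set (cl' := fun j z => Rmax (y j) (Rmin z (y (S j)))).
set (dd := fun i j => g (cl i (y (S j))) - g (cl i (y j))).
assert (E1 : RSsum H g x t n = fsum n (fun i => fsum m (fun j => H (t i) * dd i j))).
{ unfold RSsum. apply fsum_ext. intros i Hi. rewrite fsum_scal. f_equal. unfold dd.
  rewrite (fsum_tele m (fun j => g (cl i (y j)))). rewrite Pyn, Py0. unfold cl.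
  pose proof (Bx i ltac:(lia)). pose proof (Bx (S i) ltac:(lia)). pose proof (Mx i Hi).
  rewrite (Rmin_right b (x (S i))) by lra. rewrite (Rmax_right (x i) (x (S i))) by lra.
  rewrite (Rmin_left a (x (S i))) by lra. rewrite (Rmax_left (x i) a) by lra. auto. }
assert (E2 : RSsum H g y s m = fsum m (fun j => fsum n (fun i => H (s j) * dd i j))).
{ unfold RSsum. apply fsum_ext. intros j Hj. rewrite fsum_scal. f_equal.
  rewrite (fsum_ext n _ (fun i => g (cl' j (x (S i))) - g (cl' j (x i)))).
  2:{ intros i Hi. unfold dd, cl, cl'. destruct (clamp_fact (x i) (x (S i)) (y j) (y (S j)) (Mx i Hi) (My j Hj)) as [[A [B _]]|[A B]].
      rewrite A, B. auto. rewrite A, B. ring. }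
  rewrite (fsum_tele n (fun i => g (cl' j (x i)))). rewrite Pxn, Px0. unfold cl'.
  pose proof (By j ltac:(lia)). pose proof (By (S j) ltac:(lia)). pose proof (My j Hj).
  rewrite (Rmin_right b (y (S j))) by lra. rewrite (Rmax_right (y j) (y (S j))) by lra.
  rewrite (Rmin_left a (y (S j))) by lra. rewrite (Rmax_left (y j) a) by lra. auto. }
rewrite E1, E2, <- (fsum_swap n m (fun i j => H (s j) * dd i j)), <- fsum_minus.
eapply Rle_trans. apply fsum_abs.
apply Rle_trans with (fsum n (fun i => e * varsumf g (fun j => cl i (y j)) m)).
{ apply fsum_le. intros i Hi. rewrite <- fsum_minus. eapply Rle_trans. apply fsum_abs.
  unfold varsumf. rewrite <- fsum_scal. apply fsum_le. intros j Hj.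
  replace (H (t i) * dd i j - H (s j) * dd i j) with ((H (t i) - H (s j)) * dd i j) by ring.
  rewrite Rabs_mult. unfold dd.
  destruct (clamp_fact (x i) (x (S i)) (y j) (y (S j)) (Mx i Hi) (My j Hj)) as [[A [B C]]|[A B]].
  - apply Rmult_le_compat_r. apply Rabs_pos. apply HH.
    + pose proof (Bx i ltac:(lia)); pose proof (Bx (S i) ltac:(lia)); destruct (Px i Hi). lra.
    + pose proof (By j ltac:(lia)); pose proof (By (S j) ltac:(lia)); destruct (Py j Hj). lra.
    + destruct (Px i Hi) as [[T1 T2] T3]. destruct (Py j Hj) as [[T4 T5] T6].
      pose proof (Rmax_l (x i) (y j)). pose proof (Rmax_r (x i) (y j)).
      pose proof (Rmin_l (x (S i)) (y (S j))). pose proof (Rmin_r (x (S i)) (y (S j))).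
      apply Rabs_def1; lra.
  - unfold cl. rewrite A. unfold Rminus. rewrite Rplus_opp_r, Rabs_R0, Rmult_0_r.
    lra. }
rewrite fsum_scal. 
apply Rmult_le_compat_l; auto.
apply (blocks g V (fun i j => cl i (y j)) n m HV).
- intros i Hi j Hj. unfold cl. pose proof (My j Hj).
  apply Rle_max_compat_l. apply Rle_min_compat_r. auto.
- intros i Hi. unfold cl. rewrite Pyn, Py0.
  pose proof (Bx (S i) ltac:(lia)). pose proof (Bx (S (S i)) ltac:(lia)). pose proof (Mx i ltac:(lia)). pose proof (Mx (S i) Hi).
  rewrite (Rmin_right b (x (S i))) by lra. rewrite (Rmax_right (x i) (x (S i))) by lra.
  rewrite (Rmin_left a (x (S (S i)))) by lra. rewrite (Rmax_left (x (S i)) a) by lra. lra.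
Qed.

Lemma unif_part2 a b d : a <= b -> d > 0 -> exists N0, forall N, (N0 <= N)%nat -> (0 < N)%nat /\ part (unif a b N) (unif a b N) N a b d.
Proof. intros Hab Hd. destruct (archi_nat ((b - a) / d)) as [N0 HN].
 assert (0 <= (b - a)/d) by (apply Rmult_le_pos; [lra| left; apply Rinv_0_lt_compat; lra]).
 exists (S N0). intros N HN0.
 assert (HN0' : INR N0 <= INR N) by (apply le_INR; lia).
 assert (HNr : 0 < INR N) by (apply lt_0_INR; lia).
 split. lia. unfold part, unif. split; [|split].
 - simpl. unfold Rdiv. ring.
 - field. lra.
 - intros i Hi. rewrite S_INR. split. split; [lra|].
   assert (0 <= (b - a) / INR N) by (apply Rmult_le_pos; [lra| left; apply Rinv_0_lt_compat; lra]).
   replace (a + (INR i + 1) * (b - a) / INR N) with (a + INR i * (b - a) / INR N + (b - a) / INR N) by (field; lra). lra.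
   replace (a + (INR i + 1) * (b - a) / INR N - (a + INR i * (b - a) / INR N)) with ((b - a) / INR N) by (field; lra).
   assert (b - a < INR N * d).
   { apply Rmult_lt_reg_r with (/ d). apply Rinv_0_lt_compat; lra.
     rewrite Rmult_assoc, Rinv_r by lra. unfold Rdiv in HN. lra. }
   apply Rmult_lt_reg_r with (INR N); auto. unfold Rdiv. rewrite Rmult_assoc, Rinv_l by lra. lra. Qed.

Lemma ucont H a b : (forall u, a <= u <= b -> continuity_pt H u) -> forall e, e > 0 ->
  exists d, d > 0 /\ forall u v, a <= u <= b -> a <= v <= b -> Rabs (u - v) < 2 * d -> Rabs (H u - H v) <= e.
Proof. intros Hc e He. destruct (Heine_cor2 Hc (mkposreal e He)) as [[d Hd] Hdd]. simpl in Hdd.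
 exists (d / 2). split. lra. intros u v Hu Hv Huv. left. apply Hdd; auto. lra. Qed.

Lemma ex_on H g a b : a <= b -> (forall u, a <= u <= b -> continuity_pt H u) -> bounded_variation g ->
  exists I, RS_integral_on H g a b I.
Proof.
intros Hab Hc Hbv. destruct (bv_bound g Hbv) as [V [HV0 HV]].
set (s := fun N => RSsum H g (unif a b N) (unif a b N) N).
assert (Hcs : Cauchy_crit s).
{ intros eps He. set (e := eps / (2 * (V + 1))). assert (He' : e > 0) by (unfold e; apply Rdiv_lt_0_compat; lra).
  destruct (ucont H a b Hc e He') as [d [Hd Hdd]].
  destruct (unif_part2 a b d Hab Hd) as [N0 HN0]. exists N0. intros n m Hn Hm.
  destruct (HN0 n Hn) as [_ Pn]. destruct (HN0 m Hm) as [_ Pm].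
  pose proof (cmp H g V a b d e _ _ _ _ _ _ HV (Rlt_le _ _ He') Pn Pm Hdd). unfold Rdist, s.
  assert (e * V < eps). { unfold e. apply Rle_lt_trans with (eps / 2). 
    unfold Rdiv. rewrite Rinv_mult. assert (/ (V + 1) * V <= 1). { apply Rmult_le_reg_l with (V + 1). lra. rewrite <- Rmult_assoc, Rinv_r by lra. lra. }
    nra. lra. }
  lra. }
destruct (Rcomplete.R_complete s Hcs) as [l Hl].
exists l. apply rs_intro. intros eps He.
set (e := eps / (2 * (V + 1))). assert (He' : e > 0) by (unfold e; apply Rdiv_lt_0_compat; lra).
destruct (ucont H a b Hc e He') as [d [Hd Hdd]]. exists d. split; auto.
intros n x t Px.
destruct (unif_part2 a b d Hab Hd) as [N0 HN0]. destruct (Hl (eps/2)) as [N1 HN1]. lra.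
destruct (HN0 (max N0 N1) ltac:(lia)) as [_ PN].
specialize (HN1 (max N0 N1) ltac:(lia)). unfold Rdist, s in HN1.
pose proof (cmp H g V a b d e _ _ _ _ _ _ HV (Rlt_le _ _ He') Px PN Hdd).
assert (e * V < eps / 2). { unfold e. 
    unfold Rdiv. rewrite Rinv_mult. assert (/ (V + 1) * V < 1). { apply Rmult_lt_reg_l with (V + 1). lra. rewrite <- Rmult_assoc, Rinv_r by lra. lra. }
    assert (0 < eps * / 2) by lra. nra. }
pose proof (Rabs_triang (RSsum H g x t n - RSsum H g (unif a b (max N0 N1)) (unif a b (max N0 N1)) (max N0 N1))
   (RSsum H g (unif a b (max N0 N1)) (unif a b (max N0 N1)) (max N0 N1) - l)).
replace (RSsum H g x t n - RSsum H g (unif a b (max N0 N1)) (unif a b (max N0 N1)) (max N0 N1) +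
      (RSsum H g (unif a b (max N0 N1)) (unif a b (max N0 N1)) (max N0 N1) - l)) with (RSsum H g x t n - l) in H2 by ring.
lra.
Qed.

Lemma zero_small X : (forall eps, eps > 0 -> Rabs X < eps) -> X = 0.
Proof. intros H. destruct (Req_dec X 0); auto. exfalso. specialize (H (Rabs X) (Rabs_pos_lt _ H0)). lra. Qed.

Lemma rs_unique H g a b I J : a <= b -> RS_integral_on H g a b I -> RS_integral_on H g a b J -> I = J.
Proof. intros Hab HI HJ. apply Rminus_diag_uniq. apply zero_small. intros eps He.
 destruct (rs_use _ _ _ _ _ HI (eps/2)) as [d1 [Hd1 P1]]. lra.
 destruct (rs_use _ _ _ _ _ HJ (eps/2)) as [d2 [Hd2 P2]]. lra.
 destruct (unif_part a b (Rmin d1 d2) Hab) as [N [_ PN]]. apply Rmin_pos; auto.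
 assert (PN1 : part (unif a b N) (unif a b N) N a b d1).
 { destruct PN as [A [B C]]. split; auto. split; auto. intros i Hi. destruct (C i Hi). split; auto. pose proof (Rmin_l d1 d2). lra. }
 assert (PN2 : part (unif a b N) (unif a b N) N a b d2).
 { destruct PN as [A [B C]]. split; auto. split; auto. intros i Hi. destruct (C i Hi). split; auto. pose proof (Rmin_r d1 d2). lra. }
 specialize (P1 _ _ _ PN1). specialize (P2 _ _ _ PN2).
 pose proof (Rabs_triang (RSsum H g (unif a b N) (unif a b N) N - J) (- (RSsum H g (unif a b N) (unif a b N) N - I))).
 rewrite Rabs_Ropp in H0. replace (RSsum H g (unif a b N) (unif a b N) N - J + - (RSsum H g (unif a b N) (unif a b N) N - I)) with (I - J) in H0 by ring.
 lra. Qed.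

Lemma part_weaken x t n a b d d' : d <= d' -> part x t n a b d -> part x t n a b d'.
Proof. intros Hd [A [B C]]. split; auto. split; auto. intros i Hi. destruct (C i Hi). split; auto. lra. Qed.

Lemma rs_lin H1 H2 g a b I1 I2 c1 c2 : RS_integral_on H1 g a b I1 -> RS_integral_on H2 g a b I2 ->
  RS_integral_on (fun t => c1 * H1 t + c2 * H2 t) g a b (c1 * I1 + c2 * I2).
Proof. intros HI1 HI2. apply rs_intro. intros eps He.
 set (e := eps / (2 * (Rabs c1 + Rabs c2 + 1))).
 assert (He' : e > 0). { unfold e. apply Rdiv_lt_0_compat. lra. pose proof (Rabs_pos c1); pose proof (Rabs_pos c2); lra. }
 destruct (rs_use _ _ _ _ _ HI1 e He') as [d1 [Hd1 P1]]. destruct (rs_use _ _ _ _ _ HI2 e He') as [d2 [Hd2 P2]].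
 exists (Rmin d1 d2). split. apply Rmin_pos; auto. intros n x t Px.
 specialize (P1 n x t (part_weaken _ _ _ _ _ _ _ (Rmin_l _ _) Px)). specialize (P2 n x t (part_weaken _ _ _ _ _ _ _ (Rmin_r _ _) Px)).
 assert (E : RSsum (fun t => c1 * H1 t + c2 * H2 t) g x t n = c1 * RSsum H1 g x t n + c2 * RSsum H2 g x t n).
 { unfold RSsum. rewrite <- !fsum_scal, <- fsum_plus. apply fsum_ext. intros; ring. }
 rewrite E. replace (c1 * RSsum H1 g x t n + c2 * RSsum H2 g x t n - (c1 * I1 + c2 * I2)) with
   (c1 * (RSsum H1 g x t n - I1) + c2 * (RSsum H2 g x t n - I2)) by ring.
 eapply Rle_lt_trans. apply Rabs_triang. rewrite !Rabs_mult.
 assert (Rabs c1 * Rabs (RSsum H1 g x t n - I1) <= Rabs c1 * e) by (apply Rmult_le_compat_l; [apply Rabs_pos|lra]).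
 assert (Rabs c2 * Rabs (RSsum H2 g x t n - I2) <= Rabs c2 * e) by (apply Rmult_le_compat_l; [apply Rabs_pos|lra]).
 assert ((Rabs c1 + Rabs c2) * e < eps).
 { unfold e. pose proof (Rabs_pos c1); pose proof (Rabs_pos c2).
   replace ((Rabs c1 + Rabs c2) * (eps / (2 * (Rabs c1 + Rabs c2 + 1)))) with (eps * ((Rabs c1 + Rabs c2) / (2 * (Rabs c1 + Rabs c2 + 1)))) by (field; lra).
   assert ((Rabs c1 + Rabs c2) / (2 * (Rabs c1 + Rabs c2 + 1)) < 1).
   { apply Rmult_lt_reg_r with (2 * (Rabs c1 + Rabs c2 + 1)). lra. unfold Rdiv. rewrite Rmult_assoc, Rinv_l by lra. lra. }
   nra. }
 lra. Qed.

Lemma rs_bound H g a b I K : a <= b -> RS_integral_on H g a b I -> (forall t, a <= t <= b -> Rabs (H t) <= K) ->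
  forall eta, eta > 0 -> exists n x, mono x n /\ x O = a /\ x n = b /\ Rabs I <= K * varsumf g x n + eta.
Proof. intros Hab HI HK eta He. destruct (rs_use _ _ _ _ _ HI eta He) as [d [Hd P]].
 destruct (unif_part a b d Hab Hd) as [N [_ PN]]. specialize (P _ _ _ PN).
 exists N, (unif a b N). split. eapply part_mono; eauto. destruct PN as [A [B C]]. split; auto. split; auto.
 assert (Rabs (RSsum H g (unif a b N) (unif a b N) N) <= K * varsumf g (unif a b N) N).
 { unfold RSsum, varsumf. rewrite <- fsum_scal. eapply Rle_trans. apply fsum_abs. apply fsum_le. intros i Hi.
   rewrite Rabs_mult. apply Rmult_le_compat_r. apply Rabs_pos. apply HK.
   pose proof (part_bounds _ _ _ _ _ _ (conj A (conj B C)) i ltac:(lia)). lra. }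
 pose proof (Rabs_triang_inv I (I - RSsum H g (unif a b N) (unif a b N) N)).
 replace (I - (I - RSsum H g (unif a b N) (unif a b N) N)) with (RSsum H g (unif a b N) (unif a b N) N) in H1 by ring.
 rewrite Rabs_minus_sym in H1. lra. Qed.

Lemma rs_bound_V H g a b I K V : a <= b -> RS_integral_on H g a b I -> (forall t, a <= t <= b -> Rabs (H t) <= K) ->
  (forall n x, mono x n -> varsumf g x n <= V) -> Rabs I <= K * V.
Proof. intros Hab HI HK HV. assert (0 <= K) by (eapply Rle_trans; [apply Rabs_pos|apply (HK a)]; lra).
 apply (gap _ _ 1). lra. intros eta He.
 destruct (rs_bound H g a b I K Hab HI HK eta He) as [n [x [Hm [_ [_ Hb]]]]].
 specialize (HV n x Hm). nra. Qed.

Lemma rs_diff_bound H1 H2 g a b I1 I2 K V : a <= b -> RS_integral_on H1 g a b I1 -> RS_integral_on H2 g a b I2 ->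
  (forall t, a <= t <= b -> Rabs (H1 t - H2 t) <= K) ->
  (forall n x, mono x n -> varsumf g x n <= V) -> Rabs (I1 - I2) <= K * V.
Proof. intros Hab HI1 HI2 HK HV. pose proof (rs_lin _ _ _ _ _ _ _ 1 (-1) HI1 HI2).
 replace (I1 - I2) with (1 * I1 + -1 * I2) by ring. apply (rs_bound_V _ g a b _ K V Hab H); auto.
 intros t Ht. replace (1 * H1 t + -1 * H2 t) with (H1 t - H2 t) by ring. auto. Qed.

Lemma part_concat x t n y s m a b c d : part x t n a b d -> part y s m b c d ->
  part (fun k => if (k <=? n)%nat then x k else y (k - n)%nat) (fun k => if (k <? n)%nat then t k else s (k - n)%nat) (n + m) a c d.
Proof. intros [A1 [B1 C1]] [A2 [B2 C2]]. split; [|split].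
 - simpl. auto.
 - destruct (Nat.leb_spec (n + m) n).
   + assert (m = O) by lia. subst m. rewrite Nat.add_0_r. congruence.
   + rewrite <- B2. f_equal. lia.
 - intros i Hi. destruct (Nat.ltb_spec i n).
   + destruct (Nat.leb_spec i n); [|lia]. destruct (Nat.leb_spec (S i) n); [|lia]. apply C1; auto.
   + destruct (Nat.leb_spec (S i) n); [lia|]. replace (S i - n)%nat with (S (i - n)) by lia.
     destruct (Nat.leb_spec i n).
     * assert (i = n) by lia. subst i. rewrite B1, <- A2. replace (n - n)%nat with O by lia. apply C2; lia.
     * apply C2; lia. Qed.

Lemma rssum_concat H g x t n y s m : x n = y O ->
  RSsum H g (fun k => if (k <=? n)%nat then x k else y (k - n)%nat) (fun k => if (k <? n)%nat then t k else s (k - n)%nat) (n + m)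
  = RSsum H g x t n + RSsum H g y s m.
Proof. intros E. unfold RSsum. rewrite fsum_split. f_equal.
 - apply fsum_ext. intros i Hi. destruct (Nat.ltb_spec i n); [|lia]. destruct (Nat.leb_spec i n); [|lia]. destruct (Nat.leb_spec (S i) n); [|lia]. auto.
 - apply fsum_ext. intros i Hi. destruct (Nat.ltb_spec (n + i) n); [lia|]. destruct (Nat.leb_spec (S (n + i)) n); [lia|].
   replace (n + i - n)%nat with i by lia. replace (S (n + i) - n)%nat with (S i) by lia.
   destruct (Nat.leb_spec (n + i) n).
   + assert (i = O) by lia. subst i. rewrite Nat.add_0_r, E. auto.
   + replace (n + i - n)%nat with i by lia. auto. Qed.

Lemma rs_add H g a b c I1 I2 I : a <= b -> b <= c -> RS_integral_on H g a b I1 -> RS_integral_on H g b c I2 ->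
  RS_integral_on H g a c I -> I = I1 + I2.
Proof. intros Hab Hbc HI1 HI2 HI. apply Rminus_diag_uniq. apply zero_small. intros eps He.
 destruct (rs_use _ _ _ _ _ HI1 (eps/3)) as [d1 [Hd1 P1]]. lra.
 destruct (rs_use _ _ _ _ _ HI2 (eps/3)) as [d2 [Hd2 P2]]. lra.
 destruct (rs_use _ _ _ _ _ HI (eps/3)) as [d3 [Hd3 P3]]. lra.
 set (d := Rmin d1 (Rmin d2 d3)). assert (Hd : d > 0) by (unfold d; repeat apply Rmin_pos; auto).
 assert (d <= d1) by (unfold d; apply Rmin_l). assert (d <= d2) by (unfold d; eapply Rle_trans; [apply Rmin_r|apply Rmin_l]).
 assert (d <= d3) by (unfold d; eapply Rle_trans; [apply Rmin_r|apply Rmin_r]).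
 destruct (unif_part a b d Hab Hd) as [N1 [_ Q1]]. destruct (unif_part b c d Hbc Hd) as [N2 [_ Q2]].
 pose proof (part_concat _ _ _ _ _ _ a b c d Q1 Q2) as Q.
 specialize (P1 _ _ _ (part_weaken _ _ _ _ _ _ _ H0 Q1)). specialize (P2 _ _ _ (part_weaken _ _ _ _ _ _ _ H1 Q2)).
 specialize (P3 _ _ _ (part_weaken _ _ _ _ _ _ _ H2 Q)). rewrite rssum_concat in P3.
 2:{ destruct Q1 as [_ [B _]]. destruct Q2 as [A _]. congruence. }
 apply Rabs_def2 in P1. apply Rabs_def2 in P2. apply Rabs_def2 in P3. apply Rabs_def1; lra. Qed.

Definition Ion H g a b := epsilon (inhabits 0) (RS_integral_on H g a b).

Lemma Ion_spec H g a b : a <= b -> continuity H -> bounded_variation g -> RS_integral_on H g a b (Ion H g a b).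
Proof. intros Hab Hc Hbv. unfold Ion. apply epsilon_spec. apply ex_on; auto. Qed.

Lemma tails H g K : continuity H -> (forall t, Rabs (H t) <= K) -> bounded_variation g ->
  forall e, e > 0 -> exists M, M >= 1 /\ forall a a' b b', a <= -M -> a' <= -M -> M <= b -> M <= b' ->
   Rabs (Ion H g a b - Ion H g a' b') <= 4 * K * e.
Proof.
intros Hc HK Hbv e He. assert (K0 : 0 <= K) by (eapply Rle_trans; [apply Rabs_pos|apply (HK 0)]).
destruct (tail_pos g Hbv e He) as [Mp HMp]. destruct (tail_neg g Hbv e He) as [Mn HMn].
set (M := Rmax (Rmax (Rabs Mp) (Rabs Mn)) 1).
assert (M1 : M >= 1) by (unfold M; apply Rle_ge, Rmax_r).
assert (M2 : Mp <= M) by (unfold M; eapply Rle_trans; [apply RRle_abs|]; eapply Rle_trans; [apply Rmax_l|apply Rmax_l]).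
assert (M3 : - M <= Mn).
{ assert (Rabs Mn <= M) by (unfold M; eapply Rle_trans; [apply Rmax_r|apply Rmax_l]).
  pose proof (Rle_abs (- Mn)) as HH. rewrite Rabs_Ropp in HH. lra. }
exists M. split; auto.
assert (Lneg : forall a0 a, a0 <= a -> a <= - M -> Rabs (Ion H g a0 a) <= K * e).
{ intros a0 a H1 H2. apply (gap _ _ 1). lra. intros eta Heta.
  destruct (rs_bound H g a0 a _ K H1 (Ion_spec H g a0 a H1 Hc Hbv) (fun t _ => HK t) eta Heta) as [n [x [Hm [_ [Hxn Hb]]]]].
  specialize (HMn n x Hm ltac:(lra)). nra. }
assert (Lpos : forall b b0, b <= b0 -> M <= b -> Rabs (Ion H g b b0) <= K * e).
{ intros b b0 H1 H2. apply (gap _ _ 1). lra. intros eta Heta.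
  destruct (rs_bound H g b b0 _ K H1 (Ion_spec H g b b0 H1 Hc Hbv) (fun t _ => HK t) eta Heta) as [n [x [Hm [Hx0 [_ Hb]]]]].
  specialize (HMp n x Hm ltac:(lra)). nra. }
assert (L3 : forall a b a0 b0, a0 <= a -> a <= -M -> M <= b -> b <= b0 -> Rabs (Ion H g a b - Ion H g a0 b0) <= 2 * K * e).
{ intros a b a0 b0 H1 H2 H3 H4.
  assert (E1 := rs_add H g a0 a b0 _ _ _ H1 ltac:(lra) (Ion_spec H g a0 a H1 Hc Hbv) (Ion_spec H g a b0 ltac:(lra) Hc Hbv) (Ion_spec H g a0 b0 ltac:(lra) Hc Hbv)).
  assert (E2 := rs_add H g a b b0 _ _ _ ltac:(lra) H4 (Ion_spec H g a b ltac:(lra) Hc Hbv) (Ion_spec H g b b0 H4 Hc Hbv) (Ion_spec H g a b0 ltac:(lra) Hc Hbv)).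
  rewrite E1, E2. specialize (Lneg a0 a H1 H2). specialize (Lpos b b0 H4 H3).
  replace (Ion H g a b - (Ion H g a0 a + (Ion H g a b + Ion H g b b0))) with (- (Ion H g a0 a + Ion H g b b0)) by ring.
  rewrite Rabs_Ropp. eapply Rle_trans. apply Rabs_triang. lra. }
intros a a' b b' Ha Ha' Hb Hb'.
pose proof (L3 a b (Rmin a a') (Rmax b b') (Rmin_l _ _) Ha Hb (Rmax_l _ _)).
pose proof (L3 a' b' (Rmin a a') (Rmax b b') (Rmin_r _ _) Ha' Hb' (Rmax_r _ _)).
replace (Ion H g a b - Ion H g a' b') with ((Ion H g a b - Ion H g (Rmin a a') (Rmax b b')) - (Ion H g a' b' - Ion H g (Rmin a a') (Rmax b b'))) by ring.
eapply Rle_trans. unfold Rminus at 1. apply Rabs_triang. rewrite Rabs_Ropp. lra.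
Qed.

Lemma ex_R H g K : continuity H -> (forall t, Rabs (H t) <= K) -> bounded_variation g -> exists L, RS_integral_R H g L.
Proof.
intros Hc HK Hbv. assert (K0 : 0 <= K) by (eapply Rle_trans; [apply Rabs_pos|apply (HK 0)]).
set (u := fun k => Ion H g (- INR k) (INR k)).
assert (Hcs : Cauchy_crit u).
{ intros eps He. destruct (tails H g K Hc HK Hbv (eps / (8 * (K + 1)))) as [M [M1 HM]].
  apply Rdiv_lt_0_compat; lra.
  destruct (archi_nat M) as [N HN]. exists N. intros n m Hn Hm. unfold Rdist, u.
  assert (INR N <= INR n) by (apply le_INR; lia). assert (INR N <= INR m) by (apply le_INR; lia).
  eapply Rle_lt_trans. apply HM; lra.
  replace (4 * K * (eps / (8 * (K + 1)))) with (eps * (K / (2 * (K + 1)))) by (field; lra).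
  assert (K / (2 * (K + 1)) < 1). { apply Rmult_lt_reg_r with (2 * (K + 1)). lra. unfold Rdiv. rewrite Rmult_assoc, Rinv_l by lra. lra. }
  nra. }
destruct (Rcomplete.R_complete u Hcs) as [L HL]. exists L.
intros eps He. destruct (tails H g K Hc HK Hbv (eps / (16 * (K + 1)))) as [M [M1 HM]].
apply Rdiv_lt_0_compat; lra.
exists M. intros a b Ha Hb. exists (Ion H g a b). split. apply Ion_spec; auto. lra.
destruct (archi_nat M) as [N1 HN1]. destruct (HL (eps/2)) as [N2 HN2]. lra.
set (k := max N1 N2). specialize (HN2 k ltac:(unfold k; lia)). unfold Rdist, u in HN2.
assert (INR N1 <= INR k) by (apply le_INR; unfold k; lia).
specialize (HM a (- INR k) b (INR k) Ha ltac:(lra) Hb ltac:(lra)).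
assert (4 * K * (eps / (16 * (K + 1))) < eps / 2).
{ replace (4 * K * (eps / (16 * (K + 1)))) with ((eps/2) * (K / (2 * (K + 1)))) by (field; lra).
  assert (K / (2 * (K + 1)) < 1). { apply Rmult_lt_reg_r with (2 * (K + 1)). lra. unfold Rdiv. rewrite Rmult_assoc, Rinv_l by lra. lra. }
  nra. }
replace (Ion H g a b - L) with ((Ion H g a b - Ion H g (- INR k) (INR k)) + (Ion H g (- INR k) (INR k) - L)) by ring.
eapply Rle_lt_trans. apply Rabs_triang. lra.
Qed.

Lemma RSR_spec H g K : continuity H -> (forall t, Rabs (H t) <= K) -> bounded_variation g -> RS_integral_R H g (RS_int_R H g).
Proof. intros. unfold RS_int_R. apply epsilon_spec. eapply ex_R; eauto. Qed.

Lemma bound_on f a b : a <= b -> (forall u, a <= u <= b -> continuity_pt f u) -> exists M, forall u, a <= u <= b -> Rabs (f u) <= M.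
Proof. intros Hab Hc. destruct (continuity_ab_maj (fun u => Rabs (f u)) a b Hab) as [Mx [HM _]].
 intros c Hc'. apply (continuity_pt_comp f Rabs). auto. apply Rcontinuity_abs.
 exists (Rabs (f Mx)). auto. Qed.

Section FF.
Variable F : R -> R.
Hypothesis HF : B_C F.

Lemma F_cont : continuity F. Proof. apply HF. Qed.
Lemma F_minf : lim_minf F 0. Proof. apply HF. Qed.
Lemma F_pinf : lim_pinf F (at_pinf F).
Proof. destruct HF as [_ [_ [l Hl]]]. unfold at_pinf. apply epsilon_spec. exists l; auto. Qed.

Lemma F_bounded : exists MF, forall u, Rabs (F u) <= MF.
Proof.
destruct (F_minf 1) as [M1 HM1]. lra. destruct (F_pinf 1) as [M2 HM2]. lra.
set (lo := Rmin M1 M2). set (hi := Rmax M1 M2).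
destruct (bound_on F lo hi) as [M HM]. unfold lo, hi. pose proof (Rmin_l M1 M2). pose proof (Rmax_l M1 M2). lra.
intros; apply F_cont.
exists (M + 1 + Rabs (at_pinf F)). intros u. pose proof (Rabs_pos (at_pinf F)).
destruct (Rle_dec u lo). { specialize (HM1 u ltac:(unfold lo in r; pose proof (Rmin_l M1 M2); lra)). rewrite Rminus_0_r in HM1.
  assert (0 <= M) by (eapply Rle_trans; [apply Rabs_pos|apply (HM lo)]; unfold lo, hi; pose proof (Rmin_l M1 M2); pose proof (Rmax_l M1 M2); lra). lra. }
destruct (Rle_dec hi u). { specialize (HM2 u ltac:(unfold hi in r; pose proof (Rmax_r M1 M2); lra)).
  assert (0 <= M) by (eapply Rle_trans; [apply Rabs_pos|apply (HM lo)]; unfold lo, hi; pose proof (Rmin_l M1 M2); pose proof (Rmax_l M1 M2); lra).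
  pose proof (Rabs_triang (F u - at_pinf F) (at_pinf F)). replace (F u - at_pinf F + at_pinf F) with (F u) in H1 by ring. lra. }
specialize (HM u ltac:(lra)). lra.
Qed.

Lemma F_ucont : forall e, e > 0 -> exists d, d > 0 /\ forall u v, Rabs (u - v) < d -> Rabs (F u - F v) <= e.
Proof.
intros e He.
destruct (F_minf (e/2)) as [M1 HM1]. lra. destruct (F_pinf (e/2)) as [M2 HM2]. lra.
set (lo := Rmin M1 M2 - 1). set (hi := Rmax M1 M2 + 1).
assert (L1 : lo <= M1 - 1) by (unfold lo; pose proof (Rmin_l M1 M2); lra).
assert (L2 : M2 + 1 <= hi) by (unfold hi; pose proof (Rmax_r M1 M2); lra).
destruct (Heine_cor2 (f:=F) (a:=lo) (b:=hi) (fun x _ => F_cont x) (mkposreal e He)) as [[d0 Hd0] Hdd]. simpl in Hdd.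
exists (Rmin d0 1). split. apply Rmin_pos; lra. intros u v Huv.
pose proof (Rmin_l d0 1). pose proof (Rmin_r d0 1).
apply Rabs_def2 in Huv as Huv'.
assert (Lm : u <= M1 -> v <= M1 -> Rabs (F u - F v) <= e).
{ intros Hu Hv. specialize (HM1 u Hu) as A1. specialize (HM1 v Hv) as A2. rewrite Rminus_0_r in A1, A2.
  unfold Rminus. eapply Rle_trans. apply Rabs_triang. rewrite Rabs_Ropp. lra. }
assert (Lp : u >= M2 -> v >= M2 -> Rabs (F u - F v) <= e).
{ intros Hu Hv. specialize (HM2 u Hu) as A1. specialize (HM2 v Hv) as A2.
  replace (F u - F v) with ((F u - at_pinf F) - (F v - at_pinf F)) by ring.
  unfold Rminus at 1. eapply Rle_trans. apply Rabs_triang. rewrite Rabs_Ropp. lra. }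
destruct (Rlt_dec u lo). apply Lm; lra.
destruct (Rlt_dec v lo). apply Lm; lra.
destruct (Rlt_dec hi u). apply Lp; lra.
destruct (Rlt_dec hi v). apply Lp; lra.
left. apply Hdd; lra.
Qed.
End FF.

Lemma ibp psi k g h a b I1 I2 : a < b -> (forall t, derivable_pt_lim psi t (- k t)) -> continuity k ->
  (forall t, derivable_pt_lim g t (h t)) -> continuity h ->
  RS_integral_on psi h a b I1 -> RS_integral_on k g a b I2 -> I1 = psi b * h b - psi a * h a + I2.
Proof.
intros Hab Hpsi Hk Hg Hh HI1 HI2. apply Rminus_diag_uniq. apply zero_small. intros eps He.
destruct (bound_on k a b ltac:(lra) (fun u _ => Hk u)) as [Mk HMk].
destruct (bound_on h a b ltac:(lra) (fun u _ => Hh u)) as [Mh HMh].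
assert (Mk0 : 0 <= Mk) by (eapply Rle_trans; [apply Rabs_pos|apply (HMk a)]; lra).
assert (Mh0 : 0 <= Mh) by (eapply Rle_trans; [apply Rabs_pos|apply (HMh a)]; lra).
set (e := eps / (3 * ((Mk + Mh + 1) * (b - a + 1)))).
assert (He' : e > 0) by (unfold e; apply Rdiv_lt_0_compat; [lra| apply Rmult_lt_0_compat; [lra|apply Rmult_lt_0_compat; lra]]).
destruct (rs_use _ _ _ _ _ HI1 (eps/3)) as [d1 [Hd1 P1]]. lra.
destruct (rs_use _ _ _ _ _ HI2 (eps/3)) as [d2 [Hd2 P2]]. lra.
destruct (ucont h a b (fun u _ => Hh u) e He') as [d3 [Hd3 U3]].
destruct (ucont k a b (fun u _ => Hk u) e He') as [d4 [Hd4 U4]].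
set (d := Rmin (Rmin d1 d2) (Rmin d3 d4)).
assert (Hd : d > 0) by (unfold d; repeat apply Rmin_pos; auto).
assert (D1 : d <= d1) by (unfold d; eapply Rle_trans; apply Rmin_l).
assert (D2 : d <= d2) by (unfold d; eapply Rle_trans; [apply Rmin_l|apply Rmin_r]).
assert (D3 : d <= d3) by (unfold d; eapply Rle_trans; [apply Rmin_r|apply Rmin_l]).
assert (D4 : d <= d4) by (unfold d; eapply Rle_trans; [apply Rmin_r|apply Rmin_r]).
destruct (unif_part a b d ltac:(lra) Hd) as [N [HN0 PN]].
set (x := unif a b N).
assert (Xstr : forall i, (i < N)%nat -> x i < x (S i)).
{ intros i Hi. unfold x, unif. rewrite S_INR. assert (0 < INR N) by (apply lt_0_INR; lia).
  assert (0 < (b - a) / INR N) by (apply Rdiv_lt_0_compat; lra).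
  replace (a + (INR i + 1) * (b - a) / INR N) with (a + INR i * (b - a) / INR N + (b - a) / INR N) by (field; lra). lra. }
set (eta := fun i => epsilon (inhabits 0) (fun c => x i < c < x (S i) /\ g (x (S i)) - g (x i) = h c * (x (S i) - x i))).
set (xi := fun i => epsilon (inhabits 0) (fun c => x i < c < x (S i) /\ psi (x (S i)) - psi (x i) = - k c * (x (S i) - x i))).
assert (Eeta : forall i, (i < N)%nat -> x i < eta i < x (S i) /\ g (x (S i)) - g (x i) = h (eta i) * (x (S i) - x i)).
{ intros i Hi. unfold eta. apply epsilon_spec. destruct (mvt g h (x i) (x (S i)) Hg (Xstr i Hi)) as [c Hc]. exists c; auto. }
assert (Exi : forall i, (i < N)%nat -> x i < xi i < x (S i) /\ psi (x (S i)) - psi (x i) = - k (xi i) * (x (S i) - x i)).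
{ intros i Hi. unfold xi. apply epsilon_spec. destruct (mvt psi (fun t => - k t) (x i) (x (S i)) Hpsi (Xstr i Hi)) as [c Hc]. exists c; auto. }
assert (Px : part x x N a b d) by exact PN.
assert (Pe : part x eta N a b d).
{ destruct PN as [A [B C]]. split; auto. split; auto. intros i Hi. destruct (Eeta i Hi) as [[E1 E2] _]. destruct (C i Hi). split; [lra|auto]. }
specialize (P1 N x x (part_weaken _ _ _ _ _ _ _ D1 Px)).
specialize (P2 N x eta (part_weaken _ _ _ _ _ _ _ D2 Pe)).
pose proof (part_bounds _ _ _ _ _ _ Px) as Bx.
destruct PN as [X0 [XN XC]]. fold x in X0, XN, XC.
assert (Tel : psi b * h b - psi a * h a = fsum N (fun i => psi (x (S i)) * h (x (S i)) - psi (x i) * h (x i))).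
{ rewrite (fsum_tele N (fun i => psi (x i) * h (x i))). rewrite X0, XN. auto. }
assert (Key : Rabs (RSsum psi h x x N - (psi b * h b - psi a * h a) - RSsum k g x eta N) <= (Mk * e + Mh * e) * (b - a)).
{ rewrite Tel. unfold RSsum. rewrite <- !fsum_minus.
  rewrite (fsum_ext N _ (fun i => (x (S i) - x i) * (k (xi i) * (h (x (S i)) - h (eta i)) + h (eta i) * (k (xi i) - k (eta i))))).
  2:{ intros i Hi. destruct (Eeta i Hi) as [_ E1]. destruct (Exi i Hi) as [_ E2]. rewrite E1.
      replace (psi (x i) * (h (x (S i)) - h (x i)) - (psi (x (S i)) * h (x (S i)) - psi (x i) * h (x i)))
        with (- (psi (x (S i)) - psi (x i)) * h (x (S i))) by ring. rewrite E2. ring. }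
  replace (b - a) with (fsum N (fun i => x (S i) - x i)) by (rewrite fsum_tele; lra).
  rewrite <- fsum_scal. eapply Rle_trans. apply fsum_abs. apply fsum_le. intros i Hi.
  destruct (Eeta i Hi) as [[E1 E2] _]. destruct (Exi i Hi) as [[E3 E4] _]. destruct (XC i Hi) as [_ E5].
  pose proof (Bx i ltac:(lia)). pose proof (Bx (S i) ltac:(lia)).
  rewrite Rabs_mult. rewrite (Rabs_right (x (S i) - x i)) by lra. rewrite Rmult_comm. apply Rmult_le_compat_r. lra.
  eapply Rle_trans. apply Rabs_triang. rewrite !Rabs_mult. apply Rplus_le_compat.
  - apply Rmult_le_compat; try apply Rabs_pos. apply HMk; lra. apply U3; try lra. apply Rabs_def1; lra.
  - apply Rmult_le_compat; try apply Rabs_pos. apply HMh; lra. apply U4; try lra. apply Rabs_def1; lra. }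
assert ((Mk * e + Mh * e) * (b - a) <= eps / 3).
{ unfold e. replace ((Mk * (eps / (3 * ((Mk + Mh + 1) * (b - a + 1)))) + Mh * (eps / (3 * ((Mk + Mh + 1) * (b - a + 1))))) * (b - a))
   with ((eps / 3) * (((Mk + Mh) * (b - a)) / ((Mk + Mh + 1) * (b - a + 1)))) by (field; lra).
  assert (((Mk + Mh) * (b - a)) / ((Mk + Mh + 1) * (b - a + 1)) <= 1).
  { apply Rmult_le_reg_r with ((Mk + Mh + 1) * (b - a + 1)). apply Rmult_lt_0_compat; lra.
    unfold Rdiv. rewrite Rmult_assoc, Rinv_l by (apply Rgt_not_eq, Rmult_lt_0_compat; lra). nra. }
  nra. }
replace (I1 - (psi b * h b - psi a * h a + I2)) with
  ((I1 - RSsum psi h x x N) + (RSsum psi h x x N - (psi b * h b - psi a * h a) - RSsum k g x eta N) + (RSsum k g x eta N - I2)) by ring.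
eapply Rle_lt_trans. apply Rabs_triang. eapply Rle_lt_trans. apply Rplus_le_compat_r. apply Rabs_triang.
rewrite Rabs_minus_sym in P1. lra.
Qed.

Lemma rs_ext H1 H2 g a b I : (forall t, H1 t = H2 t) -> RS_integral_on H1 g a b I -> RS_integral_on H2 g a b I.
Proof. intros E HI. apply rs_intro. intros eps He. destruct (rs_use _ _ _ _ _ HI eps He) as [d [Hd P]].
 exists d; split; auto. intros n x t Px. specialize (P n x t Px). unfold RSsum in *.
 rewrite (fsum_ext n _ (fun i => H1 (t i) * (g (x (S i)) - g (x i)))); auto. intros i _. rewrite E. auto. Qed.

Lemma rsr_pick H g L : RS_integral_R H g L -> forall eta, eta > 0 -> exists M, M >= 0 /\
  forall a b, a <= - M -> M <= b -> exists I, RS_integral_on H g a b I /\ Rabs (I - L) < eta.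
Proof. intros HR eta He. destruct (HR eta He) as [M HM]. exists (Rmax M 0). split. apply Rle_ge, Rmax_r.
 intros a b Ha Hb. apply HM. pose proof (Rmax_l M 0). lra. pose proof (Rmax_l M 0). lra. Qed.

Lemma dlim_ext f x l l' : derivable_pt_lim f x l -> l = l' -> derivable_pt_lim f x l'.
Proof. intros H E; subst; auto. Qed.

Lemma d_refl G F c : (forall u, derivable_pt_lim G u (F u)) -> forall t, derivable_pt_lim (fun t => G (c - t)) t (- F (c - t)).
Proof. intros HG t.
 assert (H1 : derivable_pt_lim (fct_cte c - id)%F t (0 - 1)) by (apply derivable_pt_lim_minus; [apply derivable_pt_lim_const|apply derivable_pt_lim_id]).
 pose proof (derivable_pt_lim_comp _ G t _ _ H1 (HG ((fct_cte c - id)%F t))) as H2.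
 eapply dlim_ext. exact H2. unfold minus_fct, fct_cte, id. ring. Qed.

Lemma dlim_cont f t l : derivable_pt_lim f t l -> continuity_pt f t.
Proof. intros H. apply derivable_continuous_pt. exists l. exact H. Qed.

Lemma AC_cont h : AC_bar h -> continuity h.
Proof. intros [Hac _] t. apply cont_intro. intros eps He.
 destruct (Hac (t - 1) (t + 1) ltac:(lra) eps He) as [d [Hd Hdd]].
 exists (Rmin d 1). split. apply Rmin_pos; lra. intros y Hy. pose proof (Rmin_l d 1). pose proof (Rmin_r d 1).
 apply Rabs_def2 in Hy.
 specialize (Hdd 1%nat (fun j => match j with O => Rmin t y | _ => Rmax t y end)). simpl in Hdd.
 unfold Rmin, Rmax in Hdd. destruct (Rle_dec t y).
 - assert (0 + Rabs (h y - h t) < eps) by (apply Hdd; [lra|lra| intros j Hj; destruct j; simpl; lra | lra]). lra.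
 - assert (0 + Rabs (h t - h y) < eps) by (apply Hdd; [lra|lra| intros j Hj; destruct j; simpl; lra | lra]). rewrite Rabs_minus_sym. lra.
Qed.

Section Main.
Variable F : R -> R.
Hypothesis HF : B_C F.
Let A := at_pinf F.
Definition Hx (x : R) := fun y => A - F (x - y).

Lemma Hx_cont x : continuity (Hx x).
Proof. intros y. apply cont_intro. intros eps He. destruct (cont_elim F (x - y) (F_cont F HF (x - y)) eps He) as [d [Hd Hdd]].
 exists d. split; auto. intros y' Hy'. unfold Hx. replace (A - F (x - y') - (A - F (x - y))) with (- (F (x - y') - F (x - y))) by ring.
 rewrite Rabs_Ropp. apply Hdd. replace (x - y' - (x - y)) with (- (y' - y)) by ring. rewrite Rabs_Ropp; auto. Qed.

Lemma Hx_bound : exists K, forall x t, Rabs (Hx x t) <= K.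
Proof. destruct (F_bounded F HF) as [MF HMF]. exists (Rabs A + MF). intros x t. unfold Hx.
 unfold Rminus at 1. eapply Rle_trans. apply Rabs_triang. rewrite Rabs_Ropp. specialize (HMF (x - t)). lra. Qed.

Lemma Hx_pinf x : at_pinf (Hx x) = A.
Proof. apply at_pinf_eq. intros eps He. destruct (F_minf F HF eps He) as [M HM]. exists (x - M). intros y Hy.
 unfold Hx. replace (A - F (x - y) - A) with (- (F (x - y) - 0)) by ring. rewrite Rabs_Ropp. apply HM. lra. Qed.

Lemma conv_eq g x : conv F g x = A * at_pinf g - RS_int_R (Hx x) g.
Proof. unfold conv. cbv zeta. fold A. change (fun y => A - F (x - y)) with (Hx x). rewrite Hx_pinf. auto. Qed.

Lemma I_spec g x : bounded_variation g -> RS_integral_R (Hx x) g (RS_int_R (Hx x) g).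
Proof. intros Hbv. destruct Hx_bound as [K HK]. apply (RSR_spec _ _ K). apply Hx_cont. auto. auto. Qed.

Lemma conv_cont g : bounded_variation g -> continuity (conv F g).
Proof.
intros Hbv x. apply cont_intro. intros eps He. destruct (bv_bound g Hbv) as [V [HV0 HV]].
set (e := eps / (2 * (V + 1))). assert (He' : e > 0) by (unfold e; apply Rdiv_lt_0_compat; lra).
destruct (F_ucont F HF e He') as [d [Hd Hdd]]. exists d. split; auto. intros x' Hx'.
rewrite !conv_eq. 
assert (Hb : Rabs (RS_int_R (Hx x') g - RS_int_R (Hx x) g) <= e * V).
{ apply (gap _ _ 2). lra. intros eta Heta.
  destruct (rsr_pick _ _ _ (I_spec g x' Hbv) eta Heta) as [M1 [M10 HM1]].
  destruct (rsr_pick _ _ _ (I_spec g x Hbv) eta Heta) as [M2 [M20 HM2]].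
  set (M := Rmax M1 M2). pose proof (Rmax_l M1 M2). pose proof (Rmax_r M1 M2).
  destruct (HM1 (- M) M ltac:(unfold M; lra) ltac:(unfold M; lra)) as [I1 [R1 C1]].
  destruct (HM2 (- M) M ltac:(unfold M; lra) ltac:(unfold M; lra)) as [I2 [R2 C2]].
  assert (Rabs (I1 - I2) <= e * V).
  { apply (rs_diff_bound (Hx x') (Hx x) g (- M) M I1 I2 e V); auto. unfold M; lra.
    intros t _. unfold Hx. replace (A - F (x' - t) - (A - F (x - t))) with (F (x - t) - F (x' - t)) by ring.
    apply Hdd. replace (x - t - (x' - t)) with (- (x' - x)) by ring. rewrite Rabs_Ropp; auto. }
  replace (RS_int_R (Hx x') g - RS_int_R (Hx x) g) with ((I1 - I2) - (I1 - RS_int_R (Hx x') g) + (I2 - RS_int_R (Hx x) g)) by ring.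
  eapply Rle_trans. apply Rabs_triang. eapply Rle_trans. apply Rplus_le_compat_r. unfold Rminus at 1. apply Rabs_triang.
  rewrite Rabs_Ropp. lra. }
replace (A * at_pinf g - RS_int_R (Hx x') g - (A * at_pinf g - RS_int_R (Hx x) g)) with (- (RS_int_R (Hx x') g - RS_int_R (Hx x) g)) by ring.
rewrite Rabs_Ropp. assert (e * V < eps).
{ unfold e. replace (eps / (2 * (V + 1)) * V) with (eps * (V / (2 * (V + 1)))) by (field; lra).
  assert (V / (2 * (V + 1)) < 1). { apply Rmult_lt_reg_r with (2 * (V + 1)). lra. unfold Rdiv. rewrite Rmult_assoc, Rinv_l by lra. lra. }
  nra. }
lra.
Qed.

Lemma abs5 a b c d e : Rabs (a + b + c - d + e) <= Rabs a + Rabs b + Rabs c + Rabs d + Rabs e.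
Proof. unfold Rminus. eapply Rle_trans. apply Rabs_triang. eapply Rle_trans. apply Rplus_le_compat_r. apply Rabs_triang.
 eapply Rle_trans. apply Rplus_le_compat_r. apply Rplus_le_compat_r. apply Rabs_triang.
 eapply Rle_trans. apply Rplus_le_compat_r. apply Rplus_le_compat_r. apply Rplus_le_compat_r. apply Rabs_triang.
 rewrite Rabs_Ropp. lra. Qed.

Lemma G_inc G e d : (forall u, derivable_pt_lim G u (F u)) -> (forall u v, Rabs (u - v) < d -> Rabs (F u - F v) <= e) ->
  forall u s, Rabs s < d -> Rabs (G (u + s) - G u - s * F u) <= Rabs s * e.
Proof. intros HG Hd u s Hs. destruct (Rtotal_order s 0) as [Hn|[Hz|Hp]].
 - destruct (mvt G F (u + s) u HG ltac:(lra)) as [c [Hc E]].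
   replace (G (u + s) - G u - s * F u) with (- (G u - G (u + s)) - s * F u) by ring. rewrite E.
   replace (- (F c * (u - (u + s))) - s * F u) with (s * (F c - F u)) by ring. rewrite Rabs_mult.
   apply Rmult_le_compat_l. apply Rabs_pos. apply Hd. apply Rabs_def2 in Hs. apply Rabs_def1; lra.
 - subst. replace (G (u + 0) - G u - 0 * F u) with 0 by (rewrite Rplus_0_r; ring). rewrite Rabs_R0. lra.
 - destruct (mvt G F u (u + s) HG ltac:(lra)) as [c [Hc E]]. rewrite E.
   replace (F c * (u + s - u) - s * F u) with (s * (F c - F u)) by ring. rewrite Rabs_mult.
   apply Rmult_le_compat_l. apply Rabs_pos. apply Hd. apply Rabs_def2 in Hs. apply Rabs_def1; lra. Qed.

Lemma G_lip G MF : (forall u, derivable_pt_lim G u (F u)) -> (forall u, Rabs (F u) <= MF) ->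
  forall u s, Rabs (G (u + s) - G u) <= Rabs s * MF.
Proof. intros HG HM u s. destruct (Rtotal_order s 0) as [Hn|[Hz|Hp]].
 - destruct (mvt G F (u + s) u HG ltac:(lra)) as [c [Hc E]].
   replace (G (u + s) - G u) with (- (G u - G (u + s))) by ring. rewrite E, Rabs_Ropp, Rabs_mult, Rmult_comm.
   replace (u - (u + s)) with (- s) by ring. rewrite Rabs_Ropp. apply Rmult_le_compat_l. apply Rabs_pos. auto.
 - subst. rewrite Rplus_0_r, Rminus_diag_eq, Rabs_R0, Rmult_0_l by auto. lra.
 - destruct (mvt G F u (u + s) HG ltac:(lra)) as [c [Hc E]]. rewrite E, Rabs_mult, Rmult_comm.
   replace (u + s - u) with s by ring. apply Rmult_le_compat_l. apply Rabs_pos. auto. Qed.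

Lemma conv_deriv g h : bounded_variation g -> bounded_variation h -> continuity h ->
  (forall t, derivable_pt_lim g t (h t)) -> forall x, derivable_pt_lim (conv F g) x (conv F h x).
Proof.
intros Hg Hh Hhc Hd x.
assert (Hh0 : at_pinf h = 0).
{ apply at_pinf_eq. intros eps He. destruct (deriv_tail_pos g h Hg Hh Hd eps He) as [M HM]. exists M. intros y Hy.
  rewrite Rminus_0_r. apply HM. lra. }
destruct (bv_bound h Hh) as [Vh [HVh0 HVh]].
destruct (F_bounded F HF) as [MF HMF].
assert (MF0 : 0 <= MF) by (eapply Rle_trans; [apply Rabs_pos|apply (HMF 0)]).
destruct (antideriv F (F_cont F HF)) as [G HG].
intros eps He.
set (e := eps / (2 * (Vh + 1))). assert (He' : e > 0) by (unfold e; apply Rdiv_lt_0_compat; lra).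
destruct (F_ucont F HF e He') as [d [Hd0 Hdd]].
exists (mkposreal d Hd0). simpl. intros s Hs0 Hs.
rewrite !conv_eq, Hh0.
set (Igs := RS_int_R (Hx (x + s)) g). set (Igx := RS_int_R (Hx x) g). set (Ihx := RS_int_R (Hx x) h).
assert (Key : Rabs (- (Igs - Igx) + s * Ihx) <= Rabs s * e * Vh).
{ apply (gap _ _ (2 + 2 * Rabs s * (MF + Rabs A) + Rabs s)). pose proof (Rabs_pos s). pose proof (Rabs_pos A). nra.
  intros eta Heta.
  destruct (rsr_pick _ _ _ (I_spec g (x + s) Hg) eta Heta) as [M1 [M10 HM1]].
  destruct (rsr_pick _ _ _ (I_spec g x Hg) eta Heta) as [M2 [M20 HM2]].
  destruct (rsr_pick _ _ _ (I_spec h x Hh) eta Heta) as [M3 [M30 HM3]].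
  destruct (deriv_tail_pos g h Hg Hh Hd eta Heta) as [Mp HMp].
  destruct (deriv_tail_neg g h Hg Hh Hd eta Heta) as [Mn HMn].
  set (M := Rmax (Rmax (Rmax M1 M2) (Rmax M3 1)) (Rmax (Rabs Mp) (Rabs Mn))).
  assert (L1 : M1 <= M /\ M2 <= M /\ M3 <= M /\ 1 <= M /\ Mp <= M /\ - M <= Mn).
  { unfold M. pose proof (Rmax_l (Rmax (Rmax M1 M2) (Rmax M3 1)) (Rmax (Rabs Mp) (Rabs Mn))) as Q1.
    pose proof (Rmax_r (Rmax (Rmax M1 M2) (Rmax M3 1)) (Rmax (Rabs Mp) (Rabs Mn))) as Q2.
    pose proof (Rmax_l (Rmax M1 M2) (Rmax M3 1)). pose proof (Rmax_r (Rmax M1 M2) (Rmax M3 1)).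
    pose proof (Rmax_l M1 M2). pose proof (Rmax_r M1 M2). pose proof (Rmax_l M3 1). pose proof (Rmax_r M3 1).
    pose proof (Rmax_l (Rabs Mp) (Rabs Mn)). pose proof (Rmax_r (Rabs Mp) (Rabs Mn)).
    pose proof (RRle_abs Mp). pose proof (Rle_abs (- Mn)) as W. rewrite Rabs_Ropp in W. lra. }
  destruct L1 as [L1 [L2 [L3 [L4 [L5 L6]]]]].
  destruct (HM1 (- M) M ltac:(lra) ltac:(lra)) as [I1 [R1 C1]].
  destruct (HM2 (- M) M ltac:(lra) ltac:(lra)) as [I0 [R0 C0]].
  destruct (HM3 (- M) M ltac:(lra) ltac:(lra)) as [Ih [Rh Ch]].
  set (k := fun t => F (x + s - t) - F (x - t)).
  assert (Rk : RS_integral_on k g (- M) M (I0 - I1)).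
  { apply (rs_ext (fun t => 1 * Hx x t + -1 * Hx (x + s) t)). intros t. unfold k, Hx. ring.
    replace (I0 - I1) with (1 * I0 + -1 * I1) by ring. apply rs_lin; auto. }
  set (psi := fun t => G (x + s - t) - G (x - t) - s * A).
  assert (Dpsi : forall t, derivable_pt_lim psi t (- k t)).
  { intros t. unfold psi, k.
    assert (Q := derivable_pt_lim_minus _ _ t _ _ (derivable_pt_lim_minus _ _ t _ _ (d_refl G F (x + s) HG t) (d_refl G F x HG t)) (derivable_pt_lim_const (s * A) t)).
    eapply dlim_ext. exact Q. unfold fct_cte. ring. }
  assert (Kc : continuity k).
  { intros t. unfold k. apply (continuity_pt_minus (fun t => F (x + s - t)) (fun t => F (x - t))).
    - apply cont_intro. intros ee Hee. destruct (cont_elim F _ (F_cont F HF (x + s - t)) ee Hee) as [dd [Hdd1 Hdd2]].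
      exists dd. split; auto. intros y Hy. apply Hdd2. replace (x + s - y - (x + s - t)) with (- (y - t)) by ring. rewrite Rabs_Ropp; auto.
    - apply cont_intro. intros ee Hee. destruct (cont_elim F _ (F_cont F HF (x - t)) ee Hee) as [dd [Hdd1 Hdd2]].
      exists dd. split; auto. intros y Hy. apply Hdd2. replace (x - y - (x - t)) with (- (y - t)) by ring. rewrite Rabs_Ropp; auto. }
  destruct (ex_on psi h (- M) M ltac:(lra) (fun u _ => dlim_cont _ _ _ (Dpsi u)) Hh) as [Ipsi Rpsi].
  assert (IBP := ibp psi k g h (- M) M Ipsi (I0 - I1) ltac:(lra) Dpsi Kc Hd Hhc Rpsi Rk).
  assert (Bd : Rabs (Ipsi - (- s * Ih + 0 * Ih)) <= Rabs s * e * Vh).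
  { apply (rs_diff_bound psi (fun t => - s * Hx x t + 0 * Hx x t) h (- M) M); auto. lra.
    apply rs_lin; auto.
    intros t _. unfold psi, Hx. replace (G (x + s - t)) with (G ((x - t) + s)) by (f_equal; ring).
    replace (G ((x - t) + s) - G (x - t) - s * A - (- s * (A - F (x - t)) + 0 * (A - F (x - t))))
      with (G ((x - t) + s) - G (x - t) - s * F (x - t)) by ring.
    apply (G_inc G e d HG Hdd). lra. }
  assert (Pb : forall t, Rabs (psi t) <= Rabs s * (MF + Rabs A)).
  { intros t. unfold psi. replace (G (x + s - t)) with (G ((x - t) + s)) by (f_equal; ring).
    unfold Rminus at 1. eapply Rle_trans. apply Rabs_triang. rewrite Rabs_Ropp, Rabs_mult.
    pose proof (G_lip G MF HG HMF (x - t) s). lra. }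
  assert (hb : Rabs (h M) < eta) by (apply HMp; lra).
  assert (ha : Rabs (h (- M)) < eta) by (apply HMn; lra).
  assert (Bdry : Rabs (psi M * h M - psi (- M) * h (- M)) <= 2 * Rabs s * (MF + Rabs A) * eta).
  { unfold Rminus. eapply Rle_trans. apply Rabs_triang. rewrite Rabs_Ropp, !Rabs_mult.
    pose proof (Pb M). pose proof (Pb (- M)). pose proof (Rabs_pos (psi M)). pose proof (Rabs_pos (psi (- M))).
    pose proof (Rabs_pos (h M)). pose proof (Rabs_pos (h (- M))). nra. }
  replace (- (Igs - Igx) + s * Ihx) with
    (- (Igs - I1) + (Igx - I0) + (Ipsi - (- s * Ih + 0 * Ih)) - (psi M * h M - psi (- M) * h (- M)) + s * (Ihx - Ih))
    by (rewrite IBP; ring).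
  fold Igs in C1. fold Igx in C0. fold Ihx in Ch.
  rewrite Rabs_minus_sym in C1, C0, Ch.
  assert (Rabs (s * (Ihx - Ih)) <= Rabs s * eta) by (rewrite Rabs_mult; apply Rmult_le_compat_l; [apply Rabs_pos|lra]).
  pose proof (abs5 (- (Igs - I1)) (Igx - I0) (Ipsi - (- s * Ih + 0 * Ih)) (psi M * h M - psi (- M) * h (- M)) (s * (Ihx - Ih))) as T.
  rewrite Rabs_Ropp in T. nra. }
replace ((A * at_pinf g - Igs - (A * at_pinf g - Igx)) / s - (A * 0 - Ihx)) with ((- (Igs - Igx) + s * Ihx) / s) by (field; auto).
unfold Rdiv. rewrite Rabs_mult, Rabs_inv.
assert (Hsp : 0 < Rabs s) by (apply Rabs_pos_lt; auto).
apply Rmult_lt_reg_r with (Rabs s). auto. rewrite Rmult_assoc, Rinv_l by lra.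
assert (e * Vh < eps).
{ unfold e. replace (eps / (2 * (Vh + 1)) * Vh) with (eps * (Vh / (2 * (Vh + 1)))) by (field; lra).
  assert (Vh / (2 * (Vh + 1)) < 1). { apply Rmult_lt_reg_r with (2 * (Vh + 1)). lra. unfold Rdiv. rewrite Rmult_assoc, Rinv_l by lra. lra. }
  nra. }
nra.
Qed.

End Main.

Theorem theorem4 (F : R -> R) (n : nat) (g : R -> R) (dg : nat -> R -> R) :
  B_C F ->
  dg O = g ->
  (forall k x, (k < n)%nat -> derivable_pt_lim (dg k) x (dg (S k) x)) ->
  (forall k, (k <= n)%nat -> AC_bar (dg k)) ->
  exists c : nat -> R -> R,
    c O = conv F g /\
    (forall k x, (k < n)%nat -> derivable_pt_lim (c k) x (c (S k) x)) /\
    (forall k, (k <= n)%nat -> continuity (c k)) /\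
    (forall x, c n x = conv F (dg n) x).
Proof.
intros HF Hdg0 Hder Hac.
exists (fun k => conv F (dg k)). split; [|split; [|split]].
- cbv beta. rewrite Hdg0. reflexivity.
- intros k x Hk. cbv beta. apply conv_deriv; auto.
  + apply (Hac k). lia.
  + apply (Hac (S k)). lia.
  + apply AC_cont. apply Hac. lia.
- intros k Hk. cbv beta. apply conv_cont; auto. apply (Hac k). lia.
- intros x. reflexivity.
Qed.
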